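(* Let $\sigma:S\to\{\bullet\}$ be the map from the Sierpinski space $S=\{o,c\}$ (open sets $\emptyset,\{o\},\{o,c\}$) to the one-point space. Then $\{\sigma\}^r$ (in $\mathrm{Top}$) is the class of continuous maps $p:X\to Y$ such that every fibre $p^{-1}(y)$, $y\in Y$, with the subspace topology, satisfies the separation axiom $T_1$.
   Context: For continuous maps $f:A\to B$, $g:C\to D$, $f\pitchfork g$ means: for all continuous $t:A\to C$, $b:B\to D$ with $g\circ t=b\circ f$ there is continuous $d:B\to C$ with $d\circ f=t$, $g\circ d=b$. For a class $P$, $P^r=\{g: f\pitchfork g\ \forall f\in P\}$. *)

(* Defs.v *)
From HB Require Import structures.
From mathcomp Require Import all_boot all_order all_algebra.
From mathcomp Require Import all_classical all_reals all_analysis.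
Set Implicit Arguments. Unset Strict Implicit. Unset Printing Implicit Defensive.
Local Open Scope classical_set_scope.

Definition lifting_property (A B C D : topologicalType)
  (f : A -> B) (g : C -> D) : Prop :=
  forall (t : A -> C) (b : B -> D), continuous t -> continuous b ->
    g \o t = b \o f ->
    exists d : B -> C, [/\ continuous d, d \o f = t & g \o d = b].

Definition sierpinski : Type := bool.
HB.instance Definition _ := Choice.on sierpinski.
Definition s_o : sierpinski := true.
Definition s_c : sierpinski := false.

Definition sierpinski_open (A : set sierpinski) : Prop :=
  A = set0 \/ A = [set s_o] \/ A = setT.

Lemma sierpinski_openE (A : set sierpinski) :
  sierpinski_open A <-> (A s_c -> A s_o).
Proof.
split.
  by case=> [->|[->|->]] //.
move=> H; case: (pselect (A s_o)) => Ho; case: (pselect (A s_c)) => Hc.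
- right; right; apply/seteqP; split => // -[] _ //.
- right; left; apply/seteqP; split.
    by case=> // /Hc.
  by move=> x /= ->.
- by exfalso; exact: Ho (H Hc).
- left; apply/seteqP; split => // -[] //.
Qed.

Lemma sierpinski_opT : sierpinski_open setT.
Proof. by right; right. Qed.

Lemma sierpinski_opI : setI_closed sierpinski_open.
Proof.
move=> A B /sierpinski_openE HA /sierpinski_openE HB.
by apply/sierpinski_openE => -[/HA ? /HB ?].
Qed.

Lemma sierpinski_op_bigU (I : Type) (f : I -> set sierpinski) :
  (forall i, sierpinski_open (f i)) -> sierpinski_open (\bigcup_i f i).
Proof.
move=> Hf; apply/sierpinski_openE => -[i _ Hi].
by exists i => //; apply/(sierpinski_openE (f i)).1.
Qed.

HB.instance Definition _ := isOpenTopological.Build sierpinski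
  sierpinski_opT sierpinski_opI sierpinski_op_bigU.

Definition point_space : Type := discrete_topology unit.

Definition sigma_map : sierpinski -> point_space := fun _ => tt.

(* Main.v *)
Require Import Defs.
From HB Require Import structures.
From mathcomp Require Import all_boot all_order all_algebra.
From mathcomp Require Import all_classical all_reals all_analysis.
Local Open Scope classical_set_scope.

Lemma sier_open (A : set sierpinski) : open A <-> (A s_c -> A s_o).
Proof. exact: sierpinski_openE. Qed.

Lemma settype_open (X : topologicalType) (B : set X) (U : set (set_type B)) :
  open U -> exists2 V : set X, open V & set_val @^-1` V = U.
Proof. by case=> V oV <-; exists V. Qed.

Lemma settype_open' (X : topologicalType) (B : set X) (V : set X) :
  open V -> @open (set_type B) (set_val @^-1` V).
Proof. by move=> oV; exists V. Qed.

Theorem mainTheorem5 (X Y : topologicalType) (p : X -> Y) :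
  continuous p ->
  (lifting_property sigma_map p <->
   forall y : Y, @accessible_space (set_type (p @^-1` [set y]))).
Proof.
move=> _; split.
- move=> HL y a b ab.
  apply: contrapT => Hno.
  have Hab : forall V : set X, open V -> V (set_val a) -> V (set_val b).
    move=> V oV Va; apply: contrapT => Vb; apply: Hno.
    exists (set_val @^-1` V); split; first exact: settype_open'.
      by rewrite inE.
    by rewrite inE.
  pose t : sierpinski -> X := fun s => if s then set_val b else set_val a.
  have ct : continuous t.
    apply/continuousP => A oA; apply/sier_open => /=.
    by rewrite /t /s_c /s_o /=; apply: Hab.
  have Et : p \o t = (fun _ => y) \o sigma_map.
    apply: funext => s /=; rewrite /t; case: s.
      by have /set_mem := valP b.
    by have /set_mem := valP a.
  have [d [_ dE _]] := HL t (fun _ => y) ct (@cst_continuous _ _ y) Et.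
  have E : t s_o = t s_c.
    by rewrite -dE /=.
  move: ab; rewrite /t /s_o /s_c /= in E.
  by apply/negP; rewrite negbK; apply/eqP; apply: val_inj.
- move=> HT t b ct cb E.
  have Fo : (p @^-1` [set b tt]) (t s_o).
    by have := congr1 (fun f => f s_o) E.
  have Fc : (p @^-1` [set b tt]) (t s_c).
    by have := congr1 (fun f => f s_c) E.
  have Eoc : t s_o = t s_c.
    apply: contrapT => ne.
    pose xo : set_type (p @^-1` [set b tt]) := exist _ (t s_o) (mem_set Fo).
    pose xc : set_type (p @^-1` [set b tt]) := exist _ (t s_c) (mem_set Fc).
    have : xc != xo.
      by apply/negP => /eqP [] /esym.
    move=> /(HT (b tt)) [A [oA Ac Ao]].
    have [V oV VA] := @settype_open _ _ _ oA.
    have /continuousP /(_ V oV) /sier_open Vt := ct.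
    move: Ac Ao; rewrite -VA !inE /=.
    by move=> /Vt.
  exists (fun _ => t s_o); split.
  + exact: cst_continuous.
  + by apply: funext => -[] //=.
  + apply: funext => -[] /=.
    by have := congr1 (fun f => f s_o) E.
Qed.
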